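(* Let $Q_1,\dots,Q_4$ be quaternion division algebras over $F$ with $g_{ij},h_i,d\ge2$ for all indices, and $X=\prod_{i=1}^4\mathrm{SB}(Q_i)$. Let $1\le m\le3$, and let $i,j,k,l$ be such that $\{i,j,k,l\}=\{1,2,3,4\}$. Then: (1) If $d=2$ then $2\sum_{1\le p<q\le4}y_py_q\in\mathrm{Im}(\mathrm{res}^{2/3})$. If $h_l=2$ then $2(y_iy_j+y_iy_k+y_jy_k)\in\mathrm{Im}(\mathrm{res}^{2/3})$. (2) If $g_{ij}=2$ then $4y_iy_jy_k,4y_iy_jy_l\in\mathrm{Im}(\mathrm{res}^{3/4})$. If $h_l=2$ then $4y_iy_jy_k$ and $-4y_iy_jy_k+4\sum_{1\le p<q<r\le4}y_py_qy_r$ lie in $\mathrm{Im}(\mathrm{res}^{3/4})$. If $g_{ij}=g_{ik}=2$ then $4y_iy_jy_k,4y_iy_jy_l,4y_iy_ky_l\in\mathrm{Im}(\mathrm{res}^{3/4})$. If $d=2$, or $|G|\ge4$, or $|G\cap J_m|=2$ for some $m$, or $|G\cap K_i|=3$ for some $i$, then $4y_py_qy_r\in\mathrm{Im}(\mathrm{res}^{3/4})$ for all $1\le p<q<r\le4$. (3) If $d\in\{2,4\}$, or $|G|\ge1$, or $|H_2|\ge1$, then $8y_1y_2y_3y_4\in\Gamma^4(X)$. If $|G\cap J_m|=2$ for some $m$, then $4y_1y_2y_3y_4\in\Gamma^4(X)$.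
   Context: Let $Q_1,\dots,Q_4$ be quaternion algebras over a field $F$, $X=\prod_{i=1}^4\mathrm{SB}(Q_i)$, and $E$ a splitting field. Then $K(X_E)=\mathbb Z[x_1,\dots,x_4]/((x_1-1)^2,\dots,(x_4-1)^2)$, where $x_i$ is the pullback of the class of the tautological line bundle on the $i$-th projective line, and the restriction $K(X)\to K(X_E)$ is injective; we identify $K(X)$ with its image, which has $\mathbb Z$-basis $\{\operatorname{ind}(Q_1^{\otimes i_1}\otimes\cdots\otimes Q_4^{\otimes i_4})x_1^{i_1}\cdots x_4^{i_4}:0\le i_j\le1\}$. Put $y_i=x_i-1$. The gamma filtration $\Gamma^d$ is generated by products $\gamma_{d_1}(x_1)\cdots\gamma_{d_r}(x_r)$ with $x_s$ of rank $0$ and $\sum d_s\ge d$; $\Gamma^d(X_E)$ is spanned by monomials in the $y_i$ of degree $\ge d$, and $\mathrm{res}^{d/d+1}:\Gamma^{d/d+1}(X)\to\Gamma^{d/d+1}(X_E)$ is the induced map on quotients; a homogeneous degree-$d$ polynomial in the $y_i$ is said to lie in $\mathrm{Im}(\mathrm{res}^{d/d+1})$ if its class in $\Gamma^{d/d+1}(X_E)$ does. Notation: $g_{ij}=\operatorname{ind}(Q_i\otimes Q_j)$; $h_i=\operatorname{ind}(Q_j\otimes Q_k\otimes Q_l)$ where $\{i,j,k,l\}=\{1,2,3,4\}$; $d=\operatorname{ind}(Q_1\otimes Q_2\otimes Q_3\otimes Q_4)$; $H_m=\{i:h_i=m\}$; $J=\{12,13,14,23,24,34\}$ the set of index pairs;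 $J_1=\{12,34\}$, $J_2=\{13,24\}$, $J_3=\{14,23\}$; $K_i=\{jk,jl,kl\}$ where $\{j,k,l\}=\{1,2,3,4\}\setminus\{i\}$; $G=\{ij\in J: g_{ij}=2\}$. *)

(* Defs.v *)
(* Concrete model of K(X_E) = Z[x_1..x_4]/((x_i-1)^2)
   with its lambda/gamma structure, K(X) as the sublattice spanned by
   ind(Q_I) x^I, and the gamma filtration. Indices are 0-based: 'I_4. *)
From HB Require Import structures.
From mathcomp Require Import all_boot all_order all_algebra.
Set Implicit Arguments. Unset Strict Implicit. Unset Printing Implicit Defensive.
Import Order.TTheory GRing.Theory Num.Theory.
Local Open Scope ring_scope.

(* An element of K(X_E), written in the monomial basis y^S (S subset of
   {0,1,2,3}), where y_i = x_i - 1 and y_i^2 = 0. *)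
Definition KE := {ffun {set 'I_4} -> int}.

Definition ymon (S : {set 'I_4}) : KE := [ffun T : {set 'I_4} => ((T == S) : nat)%:Z].
(* the monomial x^I = prod_{i in I} (1 + y_i) *)
Definition xmon (I : {set 'I_4}) : KE := [ffun T : {set 'I_4} => ((T \subset I) : nat)%:Z].

Definition kone : KE := ymon set0.
(* multiplication in Z[y]/(y_i^2) *)
Definition kmul (f g : KE) : KE :=
  [ffun S : {set 'I_4} => \sum_(A : {set 'I_4} | A \subset S) f A * g (S :\: A)].
Definition kpow (u : KE) (n : nat) : KE := iter n (kmul u) kone.

(* rank = value at y = 0 (i.e. x = 1) *)
Definition rank (f : KE) : int := f set0.

(* coefficient of x^A when f is written in the Z-basis {x^I} *)
Definition xcoef (f : KE) (A : {set 'I_4}) : int :=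
  \sum_(S : {set 'I_4} | A \subset S) f S * (-1) ^+ #|S :\: A|.

Definition PS := nat -> KE.
Definition sone : PS := fun n => if n == 0%N then kone else 0.
Definition smul (p q : PS) : PS :=
  fun n => \sum_(k < n.+1) kmul (p k) (q (n - k)%N).
Definition spow (p : PS) (n : nat) : PS := iter n (smul p) sone.
(* 1 + u t  and its inverse  sum_k (-u)^k t^k *)
Definition slin (u : KE) : PS :=
  fun n => if n == 0%N then kone else if n == 1%N then u else 0.
Definition slinv (u : KE) : PS := fun n => kpow u n *~ ((-1) ^+ n).
Definition sfactor (u : KE) (m : int) : PS :=
  match m with Posz n => spow (slin u) n | Negz n => spow (slinv u) n.+1 end.

(* gamma_t(f) for a rank-0 element f = sum_I n_I x^I (the x^I being classes
   of line bundles):  gamma_t(f) = prod_I (1 + (x^I - 1) t)^{n_I}. *)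
Definition gammaT (f : KE) : PS :=
  foldr (fun I acc => smul (sfactor (xmon I - kone) (xcoef f I)) acc) sone
        (enum [set: {set 'I_4}]).
Definition gamma (n : nat) (f : KE) : KE := gammaT f n.

(* Index data: ind I = ind(tensor_{i in I} Q_i). *)
Definition gidx (ind : {set 'I_4} -> nat) (i j : 'I_4) : nat := ind [set i; j].
Definition hidx (ind : {set 'I_4} -> nat) (i : 'I_4) : nat := ind (~: [set i]).
Definition didx (ind : {set 'I_4} -> nat) : nat := ind [set: 'I_4].

(* K(X), identified with its image in K(X_E) *)
Definition inKX (ind : {set 'I_4} -> nat) (f : KE) : Prop :=
  exists c : {set 'I_4} -> int,
    f = \sum_(I : {set 'I_4}) xmon I *~ (c I * (ind I)%:Z).

Definition gprod (s : seq (nat * KE)) : KE :=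
  foldr (fun p acc => kmul (gamma p.1 p.2) acc) kone s.

(* Gamma^d(X) (as a subgroup of K(X_E)): Z-span of the products
   gamma_{d_1}(a_1)...gamma_{d_r}(a_r), a_s in K(X) of rank 0, sum d_s >= d *)
Definition GammaX (ind : {set 'I_4} -> nat) (d : nat) (z : KE) : Prop :=
  exists gs : seq (int * seq (nat * KE)),
    (forall g, g \in gs ->
       (forall p, p \in g.2 -> inKX ind p.2 /\ rank p.2 = 0)
       /\ (d <= sumn (map fst g.2))%N)
    /\ z = \sum_(g <- gs) gprod g.2 *~ g.1.

(* a homogeneous degree-d polynomial p lies in Im(res^{d/d+1}):
   some z in Gamma^d(X) agrees with p modulo Gamma^{d+1}(X_E) =
   span of monomials of degree >= d+1 *)
Definition inImRes (ind : {set 'I_4} -> nat) (d : nat) (p : KE) : Prop :=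
  exists z, GammaX ind d z /\ forall S : {set 'I_4}, (#|S| <= d)%N -> z S = p S.

(* G = {ij : g_ij = 2}, as a set of 2-element subsets *)
Definition Gset (ind : {set 'I_4} -> nat) : {set {set 'I_4}} :=
  [set S : {set 'I_4} | (#|S| == 2)%N && (ind S == 2%N)].
Definition Hset (ind : {set 'I_4} -> nat) (m : nat) : {set 'I_4} :=
  [set i | hidx ind i == m].
(* J_{m+1} for m : 'I_3: {{0, m+1}, complement}, i.e. J_1={12,34}, ... *)
Definition Jset (m : 'I_3) : {set {set 'I_4}} :=
  [set [set ord0; lift ord0 m]; ~: [set ord0; lift ord0 m]].
Definition Kset (i : 'I_4) : {set {set 'I_4}} :=
  [set S : {set 'I_4} | (#|S| == 2)%N && (i \notin S)].

(* Standing hypotheses on indices of tensor products of quaternion division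
   algebras (consequences valid over every field): ind of the trivial tensor
   product is 1, each Q_i is division (index 2), and since
   [Q_S (x) Q_T] = [Q_{S delta T}] in Br(F), ind(S delta T) | ind S * ind T. *)
Definition quat_indices (ind : {set 'I_4} -> nat) : Prop :=
  [/\ ind set0 = 1%N,
      forall i, ind [set i] = 2%N &
      forall S T : {set 'I_4}, (ind ((S :\: T) :|: (T :\: S)) %| ind S * ind T)%N].

(* Main.v *)
Require Import Defs.
From HB Require Import structures.
From mathcomp Require Import all_boot all_order all_algebra.
From Stdlib Require Import FunctionalExtensionality.
Import Order.TTheory GRing.Theory Num.Theory.
Local Open Scope ring_scope.

Set Implicit Arguments. Unset Strict Implicit. Unset Printing Implicit Defensive.

Definition bitM (t m : nat) : bool := odd (m %/ 2 ^ t).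
Definition setOf (m : nat) : {set 'I_4} := [set x : 'I_4 | bitM x m].
Lemma in_setOf m x : (x \in setOf m) = bitM x m. Proof. by rewrite inE. Qed.
Definition o0 : 'I_4 := @Ordinal 4 0 isT.
Definition o1 : 'I_4 := @Ordinal 4 1 isT.
Definition o2 : 'I_4 := @Ordinal 4 2 isT.
Definition o3 : 'I_4 := @Ordinal 4 3 isT.
Definition pack (c0 c1 c2 c3 : bool) : nat := (c0 + c1.*2 + 4 * c2 + 8 * c3)%N.
Definition maskOf (S : {set 'I_4}) : nat := pack (o0 \in S) (o1 \in S) (o2 \in S) (o3 \in S).

Lemma ord4_cases (x : 'I_4) : [\/ x = o0, x = o1, x = o2 | x = o3].
Proof.
case: x => [[|[|[|[|//]]]] H]; [constructor 1|constructor 2|constructor 3|constructor 4];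
  exact: val_inj.
Qed.

Lemma bit_pack0 c0 c1 c2 c3 : bitM 0 (pack c0 c1 c2 c3) = c0.
Proof. by case: c0; case: c1; case: c2; case: c3. Qed.
Lemma bit_pack1 c0 c1 c2 c3 : bitM 1 (pack c0 c1 c2 c3) = c1.
Proof. by case: c0; case: c1; case: c2; case: c3. Qed.
Lemma bit_pack2 c0 c1 c2 c3 : bitM 2 (pack c0 c1 c2 c3) = c2.
Proof. by case: c0; case: c1; case: c2; case: c3. Qed.
Lemma bit_pack3 c0 c1 c2 c3 : bitM 3 (pack c0 c1 c2 c3) = c3.
Proof. by case: c0; case: c1; case: c2; case: c3. Qed.
Lemma pack_lt c0 c1 c2 c3 : (pack c0 c1 c2 c3 < 16)%N.
Proof. by case: c0; case: c1; case: c2; case: c3. Qed.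

Lemma setOf_maskOf S : setOf (maskOf S) = S.
Proof.
apply/setP => x; rewrite in_setOf /maskOf.
by case: (ord4_cases x) => ->; rewrite ?bit_pack0 ?bit_pack1 ?bit_pack2 ?bit_pack3.
Qed.

Lemma maskOf_lt S : (maskOf S < 16)%N.
Proof. exact: pack_lt. Qed.

Lemma maskOf_setOf m : (m < 16)%N -> maskOf (setOf m) = m.
Proof.
rewrite /maskOf !in_setOf /=.
by do 16?[case: m => [|m] //].
Qed.

Definition popM (m : nat) : nat := (bitM 0 m + bitM 1 m + bitM 2 m + bitM 3 m)%N.
Lemma card_setOf m : #|setOf m| = popM m.
Proof.
rewrite -sum1_card big_mkcond /= !big_ord_recr big_ord0 /= !in_setOf /popM /=.
by case: (bitM 0 m); case: (bitM 1 m); case: (bitM 2 m); case: (bitM 3 m).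
Qed.

Definition subM (a b : nat) : bool :=
  [&& bitM 0 a ==> bitM 0 b, bitM 1 a ==> bitM 1 b, bitM 2 a ==> bitM 2 b &
      bitM 3 a ==> bitM 3 b].
Lemma subset_setOf a b : (setOf a \subset setOf b) = subM a b.
Proof.
apply/subsetP/and4P => [H|[h0 h1 h2 h3] x].
  by split; apply/implyP => Hx;
    [have := H o0|have := H o1|have := H o2|have := H o3]; rewrite !in_setOf; apply.
by rewrite !in_setOf; case: (ord4_cases x) => ->; apply/implyP.
Qed.

Definition diffM (a b : nat) : nat :=
  pack (bitM 0 a && ~~ bitM 0 b) (bitM 1 a && ~~ bitM 1 b)
       (bitM 2 a && ~~ bitM 2 b) (bitM 3 a && ~~ bitM 3 b).
Lemma setD_setOf a b : setOf a :\: setOf b = setOf (diffM a b).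
Proof.
apply/setP => x; rewrite !inE /diffM.
by case: (ord4_cases x) => ->; rewrite ?bit_pack0 ?bit_pack1 ?bit_pack2 ?bit_pack3 andbC.
Qed.
Lemma diffM_lt a b : (diffM a b < 16)%N. Proof. exact: pack_lt. Qed.

Definition eqM (a b : nat) : bool := subM a b && subM b a.
Lemma eq_setOf a b : (setOf a == setOf b) = eqM a b.
Proof. by rewrite eqEsubset !subset_setOf. Qed.

Set Implicit Arguments. Unset Strict Implicit. Unset Printing Implicit Defensive.

Definition sumL (s : seq nat) (H : nat -> int) : int := foldr (fun a acc => H a + acc) 0 s.
Definition sum16 (H : nat -> int) : int := sumL (iota 0 16) H.

Lemma big_ordL n (H : nat -> int) : \sum_(k < n) H k = sumL (iota 0 n) H.
Proof. rewrite -(big_mkord (fun _ => true)) unlock /index_iota subn0. by elim: (iota 0 n) => //= a s ->. Qed.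

Lemma big_sets (F : {set 'I_4} -> int) :
  \sum_(S : {set 'I_4}) F S = sum16 (fun a => F (setOf a)).
Proof.
rewrite (reindex (fun m : 'I_16 => setOf m)) /=; last first.
  exists (fun S => Ordinal (maskOf_lt S)) => [m _|S _]; last exact: setOf_maskOf.
  by apply: val_inj; rewrite /= maskOf_setOf.
by rewrite (big_ordL 16 (fun a => F (setOf a))).
Qed.

Lemma sumL_ext s (H1 H2 : nat -> int) : (forall a, a \in s -> H1 a = H2 a) -> sumL s H1 = sumL s H2.
Proof. elim: s => //= a s IH E; rewrite E ?mem_head // IH // => b bs; apply: E; by rewrite inE bs orbT. Qed.

Definition rep (f : KE) (m : nat) : int := f (setOf m).

Lemma rep_ext f g : (forall m, (m < 16)%N -> rep f m = rep g m) -> f = g.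
Proof. move=> H; apply/ffunP => S; rewrite -(setOf_maskOf S); exact: H (maskOf_lt S). Qed.

Definition T := seq int.
Definition mkT (F : nat -> int) : T := map F (iota 0 16).
Definition gT (t : T) (m : nat) : int := nth 0 t m.
Lemma gT_mk F m : (m < 16)%N -> gT (mkT F) m = F m.
Proof. by move=> H; rewrite /gT (nth_map 0%N) ?size_iota // nth_iota. Qed.

Definition Rel (f : KE) (t : T) := forall m, (m < 16)%N -> rep f m = gT t m.

Definition kmulT (s t : T) : T :=
  mkT (fun m => sum16 (fun a => if subM a m then gT s a * gT t (diffM m a) else 0)).
Definition addT (s t : T) : T := mkT (fun m => gT s m + gT t m).
Definition scaleT (s : T) (z : int) : T := mkT (fun m => gT s m * z).
Definition zeroT : T := mkT (fun _ => 0).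
Definition ymonT (a : nat) : T := mkT (fun m => (eqM m a : nat)%:Z).
Definition xmonT (a : nat) : T := mkT (fun m => (subM m a : nat)%:Z).

Lemma Rel_kmul f g s t : Rel f s -> Rel g t -> Rel (kmul f g) (kmulT s t).
Proof.
move=> Hf Hg m Hm; rewrite gT_mk // /rep ffunE big_mkcond big_sets /sum16.
apply: sumL_ext => a; rewrite mem_iota add0n => Ha.
rewrite subset_setOf setD_setOf; case: (subM a m) => //.
by rewrite -Hf // -Hg ?diffM_lt.
Qed.

Lemma Rel_add f g s t : Rel f s -> Rel g t -> Rel (f + g) (addT s t).
Proof. by move=> Hf Hg m Hm; rewrite gT_mk // /rep !ffunE -Hf -?Hg. Qed.

Lemma Rel_scale f s z : Rel f s -> Rel (f *~ z) (scaleT s z).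
Proof. move=> Hf m Hm; rewrite gT_mk // /rep ffunMzE -Hf //. by rewrite -mulrzr intz. Qed.

Lemma Rel_zero : Rel 0 zeroT.
Proof. by move=> m Hm; rewrite gT_mk // /rep ffunE. Qed.

Lemma Rel_ymon a : Rel (ymon (setOf a)) (ymonT a).
Proof. by move=> m Hm; rewrite gT_mk // /rep ffunE eq_setOf. Qed.

Lemma Rel_xmon a : Rel (xmon (setOf a)) (xmonT a).
Proof. by move=> m Hm; rewrite gT_mk // /rep ffunE subset_setOf. Qed.

Lemma Rel_ext f s t : Rel f s -> (forall m, (m < 16)%N -> gT s m = gT t m) -> Rel f t.
Proof. by move=> H E m Hm; rewrite H // E. Qed.

Lemma Rel_sum n (F : nat -> KE) (G : nat -> T) :
  (forall k, (k < n)%N -> Rel (F k) (G k)) ->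
  Rel (\sum_(k < n) F k) (foldr (fun k acc => addT (G k) acc) zeroT (iota 0 n)).
Proof.
move=> H m Hm; rewrite /rep sum_ffunE.
rewrite (big_ordL n (fun k => F k (setOf m))).
have: forall k, k \in iota 0 n -> Rel (F k) (G k) by move=> k; rewrite mem_iota add0n; apply: H.
elim: (iota 0 n) => /= [|a s IH] Hs; first by rewrite gT_mk.
rewrite gT_mk // IH; last by move=> k ks; apply: Hs; rewrite inE ks orbT.
by rewrite -(Hs a (mem_head _ _)).
Qed.

Set Implicit Arguments. Unset Strict Implicit. Unset Printing Implicit Defensive.

Lemma setOf0 : setOf 0 = set0.
Proof. by apply/setP => x; rewrite in_setOf inE /bitM div0n. Qed.

Lemma Rel_kone : Rel kone (ymonT 0).
Proof. by rewrite /kone -setOf0; apply: Rel_ymon. Qed.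

Definition oppT (s : T) : T := mkT (fun m => - gT s m).
Lemma Rel_opp f s : Rel f s -> Rel (- f) (oppT s).
Proof. by move=> Hf m Hm; rewrite gT_mk // /rep !ffunE -Hf. Qed.

Definition RelS (p : PS) (P : nat -> T) := forall n, Rel (p n) (P n).
Definition smulT (P Q : nat -> T) (n : nat) : T :=
  foldr (fun k acc => addT (kmulT (P k) (Q (n - k)%N)) acc) zeroT (iota 0 n.+1).
Lemma RelS_smul p q P Q : RelS p P -> RelS q Q -> RelS (smul p q) (smulT P Q).
Proof.
move=> Hp Hq n; rewrite /smul /smulT.
apply: (Rel_sum (F := fun k => kmul (p k) (q (n - k)%N))) => k _.
exact: Rel_kmul.
Qed.
Definition soneT (n : nat) : T := if n == 0%N then ymonT 0 else zeroT.
Lemma RelS_sone : RelS sone soneT.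
Proof. move=> [|n]; [exact: Rel_kone | exact: Rel_zero]. Qed.
Definition slinT (U : T) (n : nat) : T :=
  if n == 0%N then ymonT 0 else if n == 1%N then U else zeroT.
Lemma RelS_slin u U : Rel u U -> RelS (slin u) (slinT U).
Proof. move=> H [|[|n]]; [exact: Rel_kone | exact: H | exact: Rel_zero]. Qed.
Definition spowT (P : nat -> T) (c : nat) : nat -> T := iter c (smulT P) soneT.
Lemma RelS_spow p P c : RelS p P -> RelS (spow p c) (spowT P c).
Proof.
move=> H; elim: c => [|c IH]; first exact: RelS_sone.
exact: RelS_smul.
Qed.

Lemma kone_set0 : kone set0 = 1. Proof. by rewrite ffunE eqxx. Qed.
Lemma kone_neq A : A != set0 -> kone A = 0. Proof. by rewrite ffunE => /negbTE ->. Qed.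

Lemma kmul1f f : kmul kone f = f.
Proof.
apply/ffunP => S; rewrite ffunE (bigD1 set0) ?sub0set //= kone_set0 mul1r setD0.
by rewrite big1 ?addr0 // => A /andP [_ HA]; rewrite kone_neq // mul0r.
Qed.

Lemma kmulf1 f : kmul f kone = f.
Proof.
apply/ffunP => S; rewrite ffunE (bigD1 S) ?subxx //= setDv kone_set0 mulr1.
rewrite big1 ?addr0 // => A /andP [sAS nAS]; rewrite kone_neq ?mulr0 //.
rewrite setD_eq0; apply: contra nAS => sSA; apply/eqP/eqP; rewrite eqEsubset sAS sSA.
by [].
Qed.

Lemma kmul0f f : kmul 0 f = 0.
Proof. by apply/ffunP => S; rewrite !ffunE big1 // => A _; rewrite ffunE mul0r. Qed.
Lemma kmulf0 f : kmul f 0 = 0.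
Proof. by apply/ffunP => S; rewrite !ffunE big1 // => A _; rewrite ffunE mulr0. Qed.

Lemma smul1s q : smul sone q = q.
Proof.
apply: functional_extensionality => n; rewrite /smul big_ord_recl /= subn0 kmul1f.
by rewrite big1 ?addr0 // => k _; rewrite kmul0f.
Qed.

Lemma smuls1 p : smul p sone = p.
Proof.
apply: functional_extensionality => n; rewrite /smul big_ord_recr /= subnn kmulf1.
rewrite big1 ?add0r // => k _; rewrite /sone.
by rewrite subn_eq0 leqNgt /= (ltn_ord k) kmulf0.
Qed.

Lemma spow1 c : spow sone c = sone.
Proof. elim: c => //= c IH; by rewrite /spow /= -/(spow sone c) IH smul1s. Qed.

Lemma slinv0 : slinv 0 = sone.
Proof.
apply: functional_extensionality => -[|n] /=; first by rewrite /slinv /= expr0 mulr1z.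
by rewrite /slinv /= kmul0f mul0rz.
Qed.

Lemma foldr_none (F : {set 'I_4} -> PS) I0 s :
  I0 \notin s -> (forall I, I != I0 -> F I = sone) ->
  foldr (fun I acc => smul (F I) acc) sone s = sone.
Proof.
move=> Hs HF; elim: s Hs => //= a s IH; rewrite inE negb_or => /andP [ha hs].
by rewrite HF 1?eq_sym // smul1s IH.
Qed.

Lemma foldr_single (F : {set 'I_4} -> PS) I0 s :
  uniq s -> I0 \in s -> (forall I, I != I0 -> F I = sone) ->
  foldr (fun I acc => smul (F I) acc) sone s = F I0.
Proof.
move=> Hu Hs HF; elim: s Hu Hs => //= a s IH /andP [ha hu].
rewrite inE; case: (eqVneq I0 a) => [e|ne] /= H.
  by subst a; rewrite (foldr_none ha HF) smuls1.
by rewrite HF 1?eq_sym // smul1s IH.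
Qed.

Set Implicit Arguments. Unset Strict Implicit. Unset Printing Implicit Defensive.

Definition U (c : nat) (I : {set 'I_4}) : KE := (xmon I - kone) *~ c%:Z.
Definition vv (i s : nat) : int := (subM s i : nat)%:Z - (eqM s 0 : nat)%:Z.

Lemma rep_U c i s : rep (U c (setOf i)) s = c%:Z * vv i s.
Proof.
rewrite /rep /U ffunMzE !ffunE subset_setOf -setOf0 eq_setOf.
by rewrite -mulrzr intz mulrC.
Qed.

Lemma xcoef_setOf f j : xcoef f (setOf j) =
  sum16 (fun s => if subM j s then rep f s * (-1) ^+ popM (diffM s j) else 0).
Proof.
rewrite /xcoef big_mkcond big_sets; apply: sumL_ext => s _.
by rewrite subset_setOf setD_setOf card_setOf.
Qed.

Definition mobCheck := all (fun i => all (fun j => (i == 0%N) ||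
  (sum16 (fun s => if subM j s then vv i s * (-1) ^+ popM (diffM s j) else 0)
    == (eqM j i : nat)%:Z - (eqM j 0 : nat)%:Z)) (iota 0 16)) (iota 0 16).
Lemma mobOK : mobCheck. Proof. vm_compute. reflexivity. Qed.

Lemma sumL_mull s c (H : nat -> int) : sumL s (fun a => c * H a) = c * sumL s H.
Proof. elim: s => /= [|a s ->]; by rewrite ?mulr0 ?mulrDr. Qed.

Lemma xcoef_U c i j : (0 < i < 16)%N -> (j < 16)%N ->
  xcoef (U c (setOf i)) (setOf j) = c%:Z * ((eqM j i : nat)%:Z - (eqM j 0 : nat)%:Z).
Proof.
move=> /andP [i0 i16] j16; rewrite xcoef_setOf /sum16.
rewrite (@sumL_ext _ _ (fun s => c%:Z * (if subM j s then vv i s * (-1) ^+ popM (diffM s j) else 0))); last first.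
  by move=> s _; case: (subM j s); rewrite ?mulr0 // rep_U mulrA.
rewrite sumL_mull; congr (_ * _); apply/eqP.
have Hi' : i \in iota 0 16 by rewrite mem_iota.
have Hj' : j \in iota 0 16 by rewrite mem_iota.
have := allP (allP mobOK i Hi') j Hj'.
by rewrite -[i == 0%N]negbK -lt0n i0.
Qed.

Lemma xmon0 : xmon set0 = kone.
Proof. by apply/ffunP => S; rewrite !ffunE subset0. Qed.

Lemma gammaU c i n : (0 < i < 16)%N -> (0 < c)%N ->
  gamma n (U c (setOf i)) = spow (slin (xmon (setOf i) - kone)) c n.
Proof.
move=> Hi Hc; rewrite /gamma /gammaT.
have i16 : (i < 16)%N by case/andP: Hi.
have ne0 : setOf i != setOf 0.
  apply/negP => /eqP E; have := maskOf_setOf i16; rewrite E maskOf_setOf //.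
  by move=> ei; move: Hi; rewrite -ei.
rewrite (foldr_single (I0 := setOf i)) ?enum_uniq ?mem_enum ?inE //.
  rewrite -{2}(maskOf_setOf i16) xcoef_U ?maskOf_setOf //.
  by rewrite -!eq_setOf eqxx (negbTE ne0) subr0 mulr1.
move=> J nJ; rewrite -(setOf_maskOf J) xcoef_U ?maskOf_lt //.
rewrite -!eq_setOf setOf_maskOf (negbTE nJ) sub0r.
case: (eqVneq J (setOf 0)) => [->|_]; last by rewrite mulr0.
rewrite setOf0 xmon0 subrr mulrN1; case: c Hc => // c _.
by rewrite -NegzE /= slinv0 smul1s spow1.
Qed.

Set Implicit Arguments. Unset Strict Implicit. Unset Printing Implicit Defensive.

Definition atom := (nat * nat * nat)%type. (* ((degree, c), mask) *)
Definition vT (i : nat) : T := addT (xmonT i) (oppT (ymonT 0)).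
Definition atomT (a : atom) : T := spowT (slinT (vT a.2)) a.1.2 a.1.1.
Definition validA (a : atom) : bool := (0 < a.2 < 16)%N && (0 < a.1.2)%N.
Definition atomK (a : atom) : nat * KE := (a.1.1, U a.1.2 (setOf a.2)).

Lemma Rel_atom a : validA a -> Rel (gamma (atomK a).1 (atomK a).2) (atomT a).
Proof.
case: a => [[n c] i] /andP [Hi Hc] /=; rewrite gammaU //.
apply: RelS_spow; apply: RelS_slin; apply: Rel_add; first exact: Rel_xmon.
apply: Rel_opp; exact: Rel_kone.
Qed.

Definition gprodT (l : seq atom) : T := foldr (fun a acc => kmulT (atomT a) acc) (ymonT 0) l.
Definition W := seq (int * seq atom).
Definition toGS (w : W) : seq (int * seq (nat * KE)) := map (fun g => (g.1, map atomK g.2)) w.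
Definition evalW (w : W) : T := foldr (fun g acc => addT (scaleT (gprodT g.2) g.1) acc) zeroT w.
Definition zW (w : W) : KE := \sum_(g <- toGS w) gprod g.2 *~ g.1.

Lemma Rel_gprod l : all validA l -> Rel (gprod (map atomK l)) (gprodT l).
Proof.
elim: l => [|a l IH] /=; first by move=> _; exact: Rel_kone.
by case/andP => Ha Hl; apply: Rel_kmul; [exact: Rel_atom | exact: IH].
Qed.

Lemma Rel_W w : all validA (flatten (map snd w)) -> Rel (zW w) (evalW w).
Proof.
rewrite /zW; elim: w => [|g w IH] /=; first by move=> _; rewrite big_nil; exact: Rel_zero.
rewrite all_cat => /andP [Hg Hw]; rewrite big_cons /=.
by apply: Rel_add; [apply: Rel_scale; exact: Rel_gprod | exact: IH].
Qed.

Lemma inKX_U ind c I : ind set0 = 1%N -> ind I = c -> I != set0 -> inKX ind (U c I).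
Proof.
move=> H0 HI nI.
exists (fun J => if J == I then 1 else if J == set0 then - c%:Z else 0).
rewrite (bigD1 I) //= eqxx mul1r HI (bigD1 set0) //=; last by rewrite eq_sym.
rewrite eq_sym (negbTE nI) eqxx H0 mulr1 big1; last first.
  by move=> J /andP [/negbTE -> /negbTE ->]; rewrite mul0r mulr0z.
by rewrite addr0 xmon0 /U mulrzBl mulrNz.
Qed.

Lemma rank_U c I : rank (U c I) = 0.
Proof. by rewrite /rank /U ffunMzE !ffunE sub0set eqxx subrr mul0rz. Qed.

Definition indOK (ind : {set 'I_4} -> nat) (w : W) :=
  forall g, g \in w -> forall a, a \in g.2 -> ind (setOf a.2) = a.1.2.
Definition degOK (d : nat) (w : W) := all (fun g => d <= sumn (map (fun a => a.1.1) g.2))%N w.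

Lemma GammaX_W ind d w : quat_indices ind -> all validA (flatten (map snd w)) ->
  indOK ind w -> degOK d w -> GammaX ind d (zW w).
Proof.
move=> [H0 _ _] Hv Hi Hd; exists (toGS w); split => // g /mapP [g0 g0w ->] /=; split.
  move=> p /mapP [a ag0 ->] /=; split; last exact: rank_U.
  have va : validA a.
    apply: (allP Hv); apply/flattenP; exists g0.2 => //; exact: map_f.
  apply: inKX_U => //; first exact: Hi ag0.
  case/andP: va => /andP [a0 a16] _; apply/negP => /eqP E.
  have := maskOf_setOf a16; rewrite E -setOf0 maskOf_setOf // => E'.
  by move: a0; rewrite -E'.
by rewrite -map_comp; exact: (allP Hd).
Qed.

Definition okLow (d : nat) (w : W) (tp : T) :=
  let e := evalW w in
  all validA (flatten (map snd w)) &&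
  all (fun m => (popM m <= d)%N ==> (gT e m == gT tp m)) (iota 0 16).
Definition okEx (w : W) (tp : T) :=
  let e := evalW w in
  all validA (flatten (map snd w)) &&
  all (fun m => gT e m == gT tp m) (iota 0 16).

Lemma inImRes_W ind d w p tp : quat_indices ind -> indOK ind w -> degOK d w ->
  Rel p tp -> okLow d w tp -> inImRes ind d p.
Proof.
move=> Hq Hi Hd Hp /andP [Hv Hc]; exists (zW w); split; first exact: GammaX_W.
move=> S; rewrite -(setOf_maskOf S) card_setOf => HS.
have Hm := maskOf_lt S.
have := Rel_W Hv Hm; rewrite /rep => ->; rewrite -/(rep p (maskOf S)) Hp //; apply/eqP.
by have := allP Hc _ (_ : maskOf S \in iota 0 16); rewrite HS; apply; rewrite mem_iota.
Qed.

Lemma GammaX_Wex ind d w z tz : quat_indices ind -> indOK ind w -> degOK d w ->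
  Rel z tz -> okEx w tz -> GammaX ind d z.
Proof.
move=> Hq Hi Hd Hz /andP [Hv Hc].
have -> : z = zW w.
  apply: rep_ext => m Hm; rewrite Hz // (Rel_W Hv Hm); apply/esym/eqP.
  by apply: (allP Hc); rewrite mem_iota.
exact: GammaX_W.
Qed.

Set Implicit Arguments. Unset Strict Implicit. Unset Printing Implicit Defensive.

Lemma set1_mask (x : 'I_4) : [set x] = setOf (2 ^ x).
Proof.
apply/setP => z; rewrite !inE.
by case: (ord4_cases x) => ->; case: (ord4_cases z) => ->.
Qed.
Lemma set2_mask (x y : 'I_4) : x != y -> [set x; y] = setOf (2 ^ x + 2 ^ y).
Proof.
move=> H; apply/setP => z; rewrite !inE; move: H.
by case: (ord4_cases x) => ->; case: (ord4_cases y) => ->; case: (ord4_cases z) => ->.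
Qed.
Lemma set3_mask (x y u : 'I_4) : x != y -> x != u -> y != u ->
  [set x; y; u] = setOf (2 ^ x + 2 ^ y + 2 ^ u).
Proof.
move=> H1 H2 H3; apply/setP => z; rewrite !inE; move: H1 H2 H3.
by case: (ord4_cases x) => ->; case: (ord4_cases y) => ->; case: (ord4_cases u) => ->;
  case: (ord4_cases z) => ->.
Qed.
Lemma setC1_mask (x : 'I_4) : ~: [set x] = setOf (15 - 2 ^ x).
Proof.
apply/setP => z; rewrite !inE.
by case: (ord4_cases x) => ->; case: (ord4_cases z) => ->.
Qed.
Lemma setT_mask : [set: 'I_4] = setOf 15.
Proof. by apply/setP => z; rewrite !inE; case: (ord4_cases z) => ->. Qed.


Lemma setC_setOf a : (a < 16)%N -> ~: setOf a = setOf (15 - a).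
Proof.
move=> Ha; apply/setP => z; rewrite !inE.
by do 16?[case: a Ha => [|a] Ha //]; case: (ord4_cases z) => ->.
Qed.

Lemma sum4 (G : 'I_4 -> int) : \sum_(p < 4) G p = G o0 + G o1 + G o2 + G o3.
Proof.
rewrite !big_ord_recl big_ord0 addr0 !addrA.
by congr (_ + _ + _ + _); congr G; apply: val_inj.
Qed.

Set Implicit Arguments. Unset Strict Implicit. Unset Printing Implicit Defensive.

Definition pairsT : T := mkT (fun m => ((popM m == 2%N) : nat)%:Z).
Definition triplesT : T := mkT (fun m => ((popM m == 3%N) : nat)%:Z).

Lemma Rel_pairs : Rel (\sum_(p < 4) \sum_(q < 4 | (p < q)%N) ymon [set p; q]) pairsT.
Proof.
move=> m Hm; rewrite gT_mk // /rep sum_ffunE sum4 !sum_ffunE !big_mkcond !sum4 /=.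
do 3 rewrite ?sum_ffunE ?big_mkcond ?sum4 /=.
rewrite !ffunE !set2_mask // !eq_setOf.
by do 16?[case: m Hm => [|m] Hm //].
Qed.

Lemma Rel_triples : Rel (\sum_(p < 4) \sum_(q < 4 | (p < q)%N) \sum_(r < 4 | (q < r)%N)
   ymon [set p; q; r]) triplesT.
Proof.
move=> m Hm; rewrite gT_mk // /rep sum_ffunE sum4 !sum_ffunE !big_mkcond !sum4 /=.
do 12 rewrite ?sum_ffunE ?big_mkcond ?sum4 /=.
rewrite !ffunE !set3_mask // !eq_setOf.
by do 16?[case: m Hm => [|m] Hm //]. Qed.

Set Implicit Arguments. Unset Strict Implicit. Unset Printing Implicit Defensive.

Definition gb (ind : {set 'I_4} -> nat) (s : nat) : bool := ind (setOf s) == 2%N.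
Definition jm (m : nat) : nat := (1 + 2 ^ m.+1)%N.

Lemma card_sets (A : {set {set 'I_4}}) : #|A|%:Z = sum16 (fun s => ((setOf s \in A) : nat)%:Z).
Proof.
rewrite -(big_sets (fun S => ((S \in A) : nat)%:Z)).
rewrite (eq_bigr (fun S => if S \in A then 1 else 0)); last by move=> S _; case: (S \in A).
by rewrite -big_mkcond sumr_const natz.
Qed.

Lemma mem_G ind s : (setOf s \in Gset ind) = (popM s == 2%N) && gb ind s.
Proof. by rewrite inE card_setOf. Qed.

Lemma mem_J (m : 'I_3) s : (setOf s \in Jset m) = eqM s (jm m) || eqM s (15 - jm m).
Proof.
have Hm : (jm m < 16)%N by case: m => [[|[|[|//]]] ?].
rewrite !inE set2_mask ?neq_lift // setC_setOf; last by rewrite lift0 expn0.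
by rewrite lift0 expn0 !eq_setOf.
Qed.

Lemma mem_K (i : 'I_4) s : (setOf s \in Kset i) = (popM s == 2%N) && ~~ bitM i s.
Proof. by rewrite inE card_setOf in_setOf. Qed.

Definition cntG (f : nat -> bool) := sum16 (fun s => ((popM s == 2%N) && f s : nat)%:Z).
Definition cntJ (f : nat -> bool) m := sum16 (fun s =>
  ((popM s == 2%N) && f s && (eqM s (jm m) || eqM s (15 - jm m)) : nat)%:Z).
Definition cntK (f : nat -> bool) i := sum16 (fun s =>
  ((popM s == 2%N) && f s && ~~ bitM i s : nat)%:Z).

Lemma card_G ind : #|Gset ind|%:Z = cntG (gb ind).
Proof. by rewrite card_sets; apply: sumL_ext => s _; rewrite mem_G. Qed.
Lemma card_GJ ind (m : 'I_3) : #|Gset ind :&: Jset m|%:Z = cntJ (gb ind) m.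
Proof. by rewrite card_sets; apply: sumL_ext => s _; rewrite inE mem_G mem_J. Qed.
Lemma card_GK ind (i : 'I_4) : #|Gset ind :&: Kset i|%:Z = cntK (gb ind) i.
Proof.
rewrite card_sets; apply: sumL_ext => s _; rewrite inE mem_G mem_K.
by case: (popM s == 2%N); rewrite ?andbF //= andbT.
Qed.

Definition agree (f g : nat -> bool) := forall s, (s < 16)%N -> popM s == 2%N -> f s = g s.

Lemma cnt_agree f g : agree f g ->
  [/\ cntG f = cntG g, forall m, cntJ f m = cntJ g m & forall i, cntK f i = cntK g i].
Proof.
move=> H; split => [|m|i]; apply: sumL_ext => s; rewrite mem_iota add0n => /andP [_ Hs];
  case E: (popM s == 2%N) => //; by rewrite H.
Qed.

Definition pairsL := [:: 3; 5; 6; 9; 10; 12]%N.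
Definition fF (x : nat) (s : nat) : bool := bitM (index s pairsL) x.
Definition pack6 (f : nat -> bool) : nat :=
  (f 3%N + 2 * f 5%N + 4 * f 6%N + 8 * f 9%N + 16 * f 10%N + 32 * f 12%N)%N.

Lemma agree_pack f : agree f (fF (pack6 f)).
Proof.
move=> s Hs; rewrite /fF /pack6.
do 16?[case: s Hs => [|s] Hs //]; move=> _ /=;
  by case: (f 3%N); case: (f 5%N); case: (f 6%N); case: (f 9%N); case: (f 10%N); case: (f 12%N).
Qed.

Definition condM (f : nat -> bool) : bool :=
  [|| (4 <= cntG f), has (fun m => cntJ f m == 2) (iota 0 3) | has (fun i => cntK f i == 3) (iota 0 4)].

Definition chkComb := all (fun x => condM (fF x) ==>
  all (fun p => all (fun q => all (fun r => ((p < q < r)%N && (r < 4)%N) ==>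
    [|| fF x (2^p + 2^q)%N, fF x (2^p + 2^r)%N | fF x (2^q + 2^r)%N]) (iota 0 4)) (iota 0 4)) (iota 0 4))
  (iota 0 64).
Lemma chkComb_ok : chkComb. Proof. vm_compute. reflexivity. Qed.

Definition chkJ := all (fun x => all (fun m => (cntJ (fF x) m == 2) ==> (fF x (jm m) && fF x (15 - jm m)))
  (iota 0 3)) (iota 0 64).
Lemma chkJ_ok : chkJ. Proof. vm_compute. reflexivity. Qed.

Definition chkPairs := all (fun p => all (fun q => (p < q)%N ==>
   ((popM (2^p + 2^q) == 2%N) && (2^p + 2^q < 16)%N)) (iota 0 4)) (iota 0 4).
Lemma chkPairs_ok : chkPairs. Proof. vm_compute. reflexivity. Qed.

Set Implicit Arguments. Unset Strict Implicit. Unset Printing Implicit Defensive.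

Definition indOK2 (ind : {set 'I_4} -> nat) (w : W) : Prop :=
  foldr (fun a P => ind (setOf a.2) = a.1.2 /\ P) True (flatten (map snd w)).
Lemma indOK2_ok ind w : indOK2 ind w -> indOK ind w.
Proof.
move=> H g gw a ag; rewrite /indOK2 in H.
have : a \in flatten (map snd w) by apply/flattenP; exists g.2 => //; exact: map_f.
elim: (flatten (map snd w)) H => [|b s IH] //= [Hb Hs]; rewrite inE => /orP [/eqP -> //|].
exact: IH.
Qed.

Definition all4 (P : nat -> nat -> nat -> nat -> bool) :=
  all (fun i => all (fun j => all (fun k => all (fun l => P i j k l) (iota 0 4)) (iota 0 4)) (iota 0 4)) (iota 0 4).
Lemma all4E P : all4 P -> forall i j k l : 'I_4, P i j k l.
Proof.
move=> H i j k l.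
have mi : forall x : 'I_4, (x : nat) \in iota 0 4 by move=> x; rewrite mem_iota ltn_ord.
exact: allP (allP (allP (allP H _ (mi i)) _ (mi j)) _ (mi k)) _ (mi l).
Qed.

Lemma uniq4 (i j k l : 'I_4) : uniq [:: i; j; k; l] -> uniq [:: (i : nat); (j : nat); (k : nat); (l : nat)].
Proof. by move=> H; rewrite -[[:: (i : nat); _; _; _]]/(map val [:: i; j; k; l]) (map_inj_uniq val_inj). Qed.

Lemma uniq4E (i j k l : 'I_4) : uniq [:: i; j; k; l] ->
  (i != j) /\ (i != k) /\ (i != l) /\ (j != k) /\ (j != l) /\ (k != l).
Proof. by rewrite /= !inE !negb_or => /and4P [/and3P [-> -> ->] /andP [-> ->] -> _]. Qed.

Section Claims.
Variable ind : {set 'I_4} -> nat.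
Hypothesis Hq : quat_indices ind.

Lemma ind_single (x : 'I_4) : ind (setOf (2 ^ x)) = 2%N.
Proof. by case: Hq => _ H1 _; rewrite -set1_mask H1. Qed.

Definition w2a (i j k : nat) : W := [:: (1, [:: (2, 2, 2^i + 2^j)%N; (1, 2, 2^k)%N])].
Definition chk2a := all4 (fun i j k _ =>
  if ((i != j) && (i != k) && (j != k)) then
  okLow 3 (w2a i j k) (scaleT (ymonT (2^i + 2^j + 2^k)) 4) else true).
Lemma chk2a_ok : chk2a. Proof. vm_compute. reflexivity. Qed.

Lemma claim_pair (a b c : 'I_4) : a != b -> a != c -> b != c -> ind [set a; b] = 2%N ->
  inImRes ind 3 (ymon (setOf (2 ^ a + 2 ^ b + 2 ^ c)) *~ 4).
Proof.
move=> ab ac bc Hab.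
apply: (inImRes_W (w := w2a a b c) (tp := scaleT (ymonT (2 ^ a + 2 ^ b + 2 ^ c)) 4)).
- exact: Hq.
- apply: indOK2_ok; split; first by rewrite -set2_mask.
  by split; first exact: ind_single.
- by [].
- apply: Rel_scale; exact: Rel_ymon.
- have := all4E chk2a_ok a b c a; rewrite ab ac bc; exact.
Qed.
End Claims.

Set Implicit Arguments. Unset Strict Implicit. Unset Printing Implicit Defensive.

Definition at_ (n c m : nat) : atom := (n, c, m).

Ltac indtac := repeat split;
  first [ by rewrite -setT_mask | exact: ind_single
        | exact: (ind_single _ o0) | exact: (ind_single _ o1)
        | exact: (ind_single _ o2) | exact: (ind_single _ o3) | idtac ].

Definition w1b (l : nat) : W := [:: (1, [:: at_ 2 2 (15 - 2 ^ l)])].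
Definition tp1b (i j k : nat) : T :=
  scaleT (addT (addT (ymonT (2 ^ i + 2 ^ j)) (ymonT (2 ^ i + 2 ^ k))) (ymonT (2 ^ j + 2 ^ k))) 2.
Definition chk1b := all4 (fun i j k l => if uniq [:: i; j; k; l] then okLow 2 (w1b l) (tp1b i j k) else true).
Lemma chk1b_ok : chk1b. Proof. vm_compute. reflexivity. Qed.

Definition w2b1 (i l : nat) : W := [:: (1, [:: at_ 2 2 (15 - 2 ^ l); at_ 1 2 (2 ^ i)])].
Definition w2b2 (l : nat) : W := [:: (1, [:: at_ 2 2 (15 - 2 ^ l); at_ 1 2 (2 ^ l)])].
Definition tp2b1 (i j k : nat) : T := scaleT (ymonT (2 ^ i + 2 ^ j + 2 ^ k)) 4.
Definition tp2b2 (i j k : nat) : T :=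
  addT (scaleT (ymonT (2 ^ i + 2 ^ j + 2 ^ k)) (-4)) (scaleT triplesT 4).
Definition chk2b := all4 (fun i j k l => if uniq [:: i; j; k; l] then
  okLow 3 (w2b1 i l) (tp2b1 i j k) && okLow 3 (w2b2 l) (tp2b2 i j k) else true).
Lemma chk2b_ok : chk2b. Proof. vm_compute. reflexivity. Qed.

Definition w2d (p q r : nat) : W :=
  [:: (1, [:: at_ 2 2 (15); at_ 1 2 (2 ^ p)]); (1, [:: at_ 2 2 (15); at_ 1 2 (2 ^ q)]);
      (1, [:: at_ 2 2 (15); at_ 1 2 (2 ^ r)]);
      (-1, [:: at_ 1 2 (1); at_ 1 2 (2); at_ 1 2 (4)]); (-1, [:: at_ 1 2 (1); at_ 1 2 (2); at_ 1 2 (8)]);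
      (-1, [:: at_ 1 2 (1); at_ 1 2 (4); at_ 1 2 (8)]); (-1, [:: at_ 1 2 (2); at_ 1 2 (4); at_ 1 2 (8)])].
Definition chk2d := all4 (fun p q r _ => if ((p < q < r)%N && (r < 4)%N) then
  okLow 3 (w2d p q r) (scaleT (ymonT (2 ^ p + 2 ^ q + 2 ^ r)) 4) else true).
Lemma chk2d_ok : chk2d. Proof. vm_compute. reflexivity. Qed.

Definition w3d2 : W := [:: (1, [:: at_ 2 2 (15); at_ 1 2 (1); at_ 1 2 (2)])].
Definition w3d4 : W := [:: (1, [:: at_ 4 4 (15)]); (-1, [:: at_ 1 2 (1); at_ 1 2 (2); at_ 1 2 (4); at_ 1 2 (8)])].
Definition wG3 (s : nat) : W :=
  [:: (1, (2, 2, s) :: [seq (1, 2, t) | t <- [:: 1; 2; 4; 8] & ~~ subM t s])].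
Definition wH (l : nat) : W :=
  [:: (1, [:: at_ 2 2 (15 - 2 ^ l); at_ 1 2 (2 ^ l); at_ 1 2 (if l == 0%N then 2 else 1)])].
Definition wJ (m : nat) : W := [:: (1, [:: at_ 2 2 (jm m); at_ 2 2 (15 - jm m)])].
Definition chk3 :=
  [&& okEx w3d2 (scaleT (ymonT 15) 8), okEx w3d4 (scaleT (ymonT 15) 8),
      all (fun s => if (popM s == 2%N) then okEx (wG3 s) (scaleT (ymonT 15) 8) else true) (iota 0 16),
      all (fun l => okEx (wH l) (scaleT (ymonT 15) 8)) (iota 0 4) &
      all (fun m => okEx (wJ m) (scaleT (ymonT 15) 4) && (popM (jm m) == 2%N) &&
          (jm m < 16)%N && (popM (15 - jm m) == 2%N) && (15 - jm m < 16)%N) (iota 0 3)].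
Lemma chk3_ok : chk3. Proof. vm_compute. reflexivity. Qed.

Set Implicit Arguments. Unset Strict Implicit. Unset Printing Implicit Defensive.

Section Parts.
Variable ind : {set 'I_4} -> nat.
Hypothesis Hq : quat_indices ind.

Lemma p1a : didx ind = 2%N ->
  inImRes ind 2 ((\sum_(p < 4) \sum_(q < 4 | (p < q)%N) ymon [set p; q]) *~ 2).
Proof.
move=> Hd2.
apply: (inImRes_W (w := [:: (1, [:: at_ 2 2 15])]) (tp := scaleT pairsT 2)).
- exact: Hq.
- apply: indOK2_ok; split => //; by rewrite -setT_mask.
- by [].
- apply: Rel_scale; exact: Rel_pairs.
- vm_compute; reflexivity.
Qed.

Lemma p1b (i j k l : 'I_4) : uniq [:: i; j; k; l] -> hidx ind l = 2%N ->
  inImRes ind 2 ((ymon [set i; j] + ymon [set i; k] + ymon [set j; k]) *~ 2).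
Proof.
move=> Hu Hl; have [ij [ik [il [jk [jl kl]]]]] := uniq4E Hu.
rewrite !set2_mask //.
apply: (inImRes_W (w := w1b l) (tp := tp1b i j k)).
- exact: Hq.
- apply: indOK2_ok; split => //; by rewrite -setC1_mask.
- by [].
- by apply: Rel_scale; apply: Rel_add; [apply: Rel_add|]; apply: Rel_ymon.
- have := all4E chk1b_ok i j k l; rewrite (uniq4 Hu); exact.
Qed.

Lemma p2a (i j k l : 'I_4) : uniq [:: i; j; k; l] -> gidx ind i j = 2%N ->
  inImRes ind 3 (ymon [set i; j; k] *~ 4) /\ inImRes ind 3 (ymon [set i; j; l] *~ 4).
Proof.
move=> Hu Hg; have [ij [ik [il [jk [jl kl]]]]] := uniq4E Hu.
by rewrite !set3_mask //; split; apply: claim_pair.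
Qed.

Lemma p2b (i j k l : 'I_4) : uniq [:: i; j; k; l] -> hidx ind l = 2%N ->
  inImRes ind 3 (ymon [set i; j; k] *~ 4)
  /\ inImRes ind 3 (ymon [set i; j; k] *~ (-4) +
       (\sum_(p < 4) \sum_(q < 4 | (p < q)%N) \sum_(r < 4 | (q < r)%N)
           ymon [set p; q; r]) *~ 4).
Proof.
move=> Hu Hl; have [ij [ik [il [jk [jl kl]]]]] := uniq4E Hu.
have := all4E chk2b_ok i j k l; rewrite (uniq4 Hu) => /andP [c1 c2].
rewrite !set3_mask //; split.
  apply: (inImRes_W (w := w2b1 i l) (tp := tp2b1 i j k)) => //.
  - apply: indOK2_ok; split; first by rewrite -setC1_mask.
    by split => //; exact: ind_single.
  - apply: Rel_scale; exact: Rel_ymon.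
apply: (inImRes_W (w := w2b2 l) (tp := tp2b2 i j k)) => //.
- apply: indOK2_ok; split; first by rewrite -setC1_mask.
  by split => //; exact: ind_single.
- apply: Rel_add; apply: Rel_scale; [exact: Rel_ymon | exact: Rel_triples].
Qed.

Lemma p2c (i j k l : 'I_4) : uniq [:: i; j; k; l] ->
  gidx ind i j = 2%N -> gidx ind i k = 2%N ->
  [/\ inImRes ind 3 (ymon [set i; j; k] *~ 4),
      inImRes ind 3 (ymon [set i; j; l] *~ 4) &
      inImRes ind 3 (ymon [set i; k; l] *~ 4)].
Proof.
move=> Hu Hg1 Hg2; have [ij [ik [il [jk [jl kl]]]]] := uniq4E Hu.
by rewrite !set3_mask //; split; apply: claim_pair.
Qed.

End Parts.

Set Implicit Arguments. Unset Strict Implicit. Unset Printing Implicit Defensive.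

Lemma condM_agree f g : agree f g -> condM f = condM g.
Proof.
move=> A; have [eG eJ eK] := cnt_agree A; rewrite /condM eG.
by congr [|| _, _ | _]; apply: eq_has => x; rewrite ?eJ ?eK.
Qed.

Lemma pack6_lt f : (pack6 f < 64)%N.
Proof.
rewrite /pack6.
by case: (f 3%N); case: (f 5%N); case: (f 6%N); case: (f 9%N); case: (f 10%N); case: (f 12%N).
Qed.

Lemma pairs_ok (p q : 'I_4) : (p < q)%N -> (popM (2 ^ p + 2 ^ q) == 2%N) && (2 ^ p + 2 ^ q < 16)%N.
Proof.
move=> pq.
have mi : forall x : 'I_4, (x : nat) \in iota 0 4 by move=> x; rewrite mem_iota ltn_ord.
have := allP (allP chkPairs_ok _ (mi p)) _ (mi q); rewrite pq; exact.
Qed.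

Section Parts2.
Variable ind : {set 'I_4} -> nat.
Hypothesis Hq : quat_indices ind.

Lemma gb_pair (p q : 'I_4) : (p < q)%N -> gb ind (2 ^ p + 2 ^ q) -> ind [set p; q] = 2%N.
Proof.
move=> pq /eqP H; rewrite set2_mask //.
by apply/eqP => E; move: pq; rewrite E ltnn.
Qed.

Lemma p2d : (didx ind = 2%N \/ (4 <= #|Gset ind|)%N
          \/ (exists m : 'I_3, #|Gset ind :&: Jset m| = 2%N)
          \/ (exists i : 'I_4, #|Gset ind :&: Kset i| = 3%N)) ->
       forall p q r : 'I_4, (p < q)%N -> (q < r)%N ->
         inImRes ind 3 (ymon [set p; q; r] *~ 4).
Proof.
move=> H p q r pq qr.
have pr : (p < r)%N by apply: ltn_trans qr.
have npq : p != q by apply/eqP => E; move: pq; rewrite E ltnn.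
have npr : p != r by apply/eqP => E; move: pr; rewrite E ltnn.
have nqr : q != r by apply/eqP => E; move: qr; rewrite E ltnn.
case: H => [Hd2|Hc].
  rewrite set3_mask //.
  apply: (inImRes_W (w := w2d p q r) (tp := scaleT (ymonT (2 ^ p + 2 ^ q + 2 ^ r)) 4)).
  - exact: Hq.
  - apply: indOK2_ok; rewrite /=; indtac.
  - by [].
  - apply: Rel_scale; exact: Rel_ymon.
  - have := all4E chk2d_ok p q r p; rewrite pq qr ltn_ord; exact.
have Hcond : condM (gb ind).
  case: Hc => [H4|[[m Hm]|[i Hi]]]; rewrite /condM.
  - by rewrite -card_G lez_nat H4.
  - apply/orP; right; apply/orP; left; apply/hasP; exists (m : nat).
      by rewrite mem_iota ltn_ord.
    by rewrite -card_GJ Hm.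
  - apply/orP; right; apply/orP; right; apply/hasP; exists (i : nat).
      by rewrite mem_iota ltn_ord.
    by rewrite -card_GK Hi.
set x := pack6 (gb ind).
have A := agree_pack (gb ind).
rewrite (condM_agree A) in Hcond.
have mi : forall y : 'I_4, (y : nat) \in iota 0 4 by move=> y; rewrite mem_iota ltn_ord.
have := allP chkComb_ok x; rewrite mem_iota pack6_lt => /(_ isT).
rewrite Hcond implyTb => Hall.
have := allP (allP (allP Hall _ (mi p)) _ (mi q)) _ (mi r).
rewrite pq qr ltn_ord /=.
have tr : forall (a b : 'I_4), (a < b)%N -> fF x (2 ^ a + 2 ^ b) = gb ind (2 ^ a + 2 ^ b).
  move=> a b ab; have /andP [h1 h2] := pairs_ok ab; by rewrite -A.
rewrite !tr // => /or3P [e|e|e].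
- by rewrite set3_mask //; apply: claim_pair => //; apply: gb_pair.
- rewrite set3_mask // addnAC.
  by apply: (claim_pair Hq npr npq); [rewrite eq_sym | exact: gb_pair pr e].
- rewrite set3_mask //.
  have -> : (2 ^ p + 2 ^ q + 2 ^ r = 2 ^ q + 2 ^ r + 2 ^ p)%N by rewrite [RHS]addnC addnA.
  by apply: (claim_pair Hq nqr); [rewrite eq_sym | rewrite eq_sym | exact: gb_pair qr e].
Qed.
End Parts2.

Set Implicit Arguments. Unset Strict Implicit. Unset Printing Implicit Defensive.

Section Parts3.
Variable ind : {set 'I_4} -> nat.
Hypothesis Hq : quat_indices ind.

Lemma G3_ok s : (s < 16)%N -> popM s == 2%N -> ind (setOf s) = 2%N ->
  indOK2 ind (wG3 s) /\ degOK 4 (wG3 s).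
Proof.
move=> Hs Hp Hg; move: Hs Hp Hg.
(by do 16?[case: s => [|s]] => //= _ _ Hg; split => //; indtac).
Qed.

Lemma p3a : (didx ind = 2%N \/ didx ind = 4%N \/ (1 <= #|Gset ind|)%N
         \/ (1 <= #|Hset ind 2|)%N) ->
       GammaX ind 4 (ymon [set: 'I_4] *~ 8).
Proof.
have := chk3_ok; case/and5P => c1 c2 c3 c4 c5.
rewrite setT_mask; case => [Hd2|[Hd4|[HG|HH]]].
- apply: (GammaX_Wex (w := w3d2) (tz := scaleT (ymonT 15) 8) Hq).
  + by apply: indOK2_ok; rewrite /=; indtac.
  + by [].
  + apply: Rel_scale; exact: Rel_ymon.
  + exact: c1.
- apply: (GammaX_Wex (w := w3d4) (tz := scaleT (ymonT 15) 8) Hq).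
  + by apply: indOK2_ok; rewrite /=; indtac.
  + by [].
  + apply: Rel_scale; exact: Rel_ymon.
  + exact: c2.
- move: HG; rewrite card_gt0 => /set0Pn [S HS].
  rewrite -(setOf_maskOf S) mem_G in HS.
  move: (maskOf_lt S) HS; move: (maskOf S) => s Hs /andP [Hp /eqP Hg].
  have [Hi Hdg] := G3_ok Hs Hp Hg.
  have := allP c3 s; rewrite mem_iota Hs => /(_ isT); rewrite Hp => Hok.
  apply: (GammaX_Wex (w := wG3 s) (tz := scaleT (ymonT 15) 8) Hq).
  + exact: indOK2_ok.
  + exact: Hdg.
  + apply: Rel_scale; exact: Rel_ymon.
  + exact: Hok.
- move: HH; rewrite card_gt0 => /set0Pn [l]; rewrite inE => /eqP Hl.
  have := allP c4 l; rewrite mem_iota ltn_ord => /(_ isT) Hok.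
  apply: (GammaX_Wex (w := wH l) (tz := scaleT (ymonT 15) 8) Hq).
  + apply: indOK2_ok; split; first by rewrite -setC1_mask.
    split; first exact: ind_single.
    split; last by [].
    by case: (nat_of_ord l == 0%N); [exact: (ind_single _ o1) | exact: (ind_single _ o0)].
  + by [].
  + apply: Rel_scale; exact: Rel_ymon.
  + exact: Hok.
Qed.

Lemma p3b : (exists m : 'I_3, #|Gset ind :&: Jset m| = 2%N) ->
       GammaX ind 4 (ymon [set: 'I_4] *~ 4).
Proof.
(case=> m Hm).
(have := chk3_ok; case/and5P => _ _ _ _ c5).
(have := allP c5 m; rewrite mem_iota ltn_ord => /(_ isT)).
(case/andP => /andP [/andP [/andP [Hok p1] l1] p2] l2).
(have HJ : cntJ (gb ind) m == 2 by rewrite -card_GJ Hm).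
(have A := agree_pack (gb ind)).
(have [_ eJ _] := cnt_agree A).
(rewrite eJ in HJ).
(have := allP (allP chkJ_ok (pack6 (gb ind)) _) m; rewrite !mem_iota pack6_lt ltn_ord => /(_ isT isT)).
(rewrite HJ implyTb => /andP [f1 f2]).
(have g1 : gb ind (jm m) by rewrite (A _ l1 p1)).
(have g2 : gb ind (15 - jm m) by rewrite (A _ l2 p2)).
(rewrite setT_mask).
apply: (GammaX_Wex (w := wJ m) (tz := scaleT (ymonT 15) 4) Hq).
- (apply: indOK2_ok; split; first exact/eqP).
  (by split; [exact/eqP|]).
- by [].
- (apply: Rel_scale; exact: Rel_ymon).
- exact: Hok.
Qed.
End Parts3.

Theorem lemma4p5 (ind : {set 'I_4} -> nat)
  (Hq : quat_indices ind)
  (Hg : forall i j : 'I_4, i != j -> (2 <= gidx ind i j)%N)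
  (Hh : forall i : 'I_4, (2 <= hidx ind i)%N)
  (Hd : (2 <= didx ind)%N) :
  (* (1) *)
  ( (didx ind = 2%N ->
       inImRes ind 2 ((\sum_(p < 4) \sum_(q < 4 | (p < q)%N) ymon [set p; q]) *~ 2))
    /\ (forall i j k l : 'I_4, uniq [:: i; j; k; l] -> hidx ind l = 2%N ->
       inImRes ind 2 ((ymon [set i; j] + ymon [set i; k] + ymon [set j; k]) *~ 2)) )
  /\
  (* (2) *)
  ( (forall i j k l : 'I_4, uniq [:: i; j; k; l] -> gidx ind i j = 2%N ->
       inImRes ind 3 (ymon [set i; j; k] *~ 4) /\ inImRes ind 3 (ymon [set i; j; l] *~ 4))
    /\ (forall i j k l : 'I_4, uniq [:: i; j; k; l] -> hidx ind l = 2%N ->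
       inImRes ind 3 (ymon [set i; j; k] *~ 4)
       /\ inImRes ind 3 (ymon [set i; j; k] *~ (-4) +
            (\sum_(p < 4) \sum_(q < 4 | (p < q)%N) \sum_(r < 4 | (q < r)%N)
                ymon [set p; q; r]) *~ 4))
    /\ (forall i j k l : 'I_4, uniq [:: i; j; k; l] ->
          gidx ind i j = 2%N -> gidx ind i k = 2%N ->
       [/\ inImRes ind 3 (ymon [set i; j; k] *~ 4),
           inImRes ind 3 (ymon [set i; j; l] *~ 4) &
           inImRes ind 3 (ymon [set i; k; l] *~ 4)])
    /\ ( (didx ind = 2%N \/ (4 <= #|Gset ind|)%N
          \/ (exists m : 'I_3, #|Gset ind :&: Jset m| = 2%N)
          \/ (exists i : 'I_4, #|Gset ind :&: Kset i| = 3%N)) ->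
       forall p q r : 'I_4, (p < q)%N -> (q < r)%N ->
         inImRes ind 3 (ymon [set p; q; r] *~ 4)) )
  /\
  (* (3) *)
  ( ( (didx ind = 2%N \/ didx ind = 4%N \/ (1 <= #|Gset ind|)%N
         \/ (1 <= #|Hset ind 2|)%N) ->
       GammaX ind 4 (ymon [set: 'I_4] *~ 8))
    /\ ( (exists m : 'I_3, #|Gset ind :&: Jset m| = 2%N) ->
       GammaX ind 4 (ymon [set: 'I_4] *~ 4)) ).
Proof.
split; [split | split; [split; [|split; [|split]] | split]].
- exact: (p1a Hq).
- move=> i j k l Hu Hl; exact: (p1b Hq Hu Hl).
- move=> i j k l Hu Hl; exact: (p2a Hq Hu Hl).
- move=> i j k l Hu Hl; exact: (p2b Hq Hu Hl).
- move=> i j k l Hu H1 H2; exact: (p2c Hq Hu H1 H2).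
- exact: (p2d Hq).
- exact: (p3a Hq).
- exact: (p3b Hq).
Qed.
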